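(* Let $A=\begin{pmatrix}\alpha&0\\\beta&0\end{pmatrix}$ and $B=\begin{pmatrix}0&\gamma\\0&\delta\end{pmatrix}$ be rank-one matrices in $M_2(\mathbb C)$. Then every matrix in $A^\perp\cap B^\perp$ has rank at most one if and only if $(\alpha,\beta)\in\mathbb C(\gamma,\delta)\setminus\{0\}$.
   Context: $M_2(\mathbb C)$ carries the operator (spectral) norm. $X\perp Y$ (Birkhoff–James orthogonality) means $\|X+\lambda Y\|\ge\|X\|$ for all $\lambda\in\mathbb C$, and $X^\perp:=\{Y: X\perp Y\}$. *)

(* Defs.v *)
From HB Require Import structures.
From mathcomp Require Import all_boot all_order all_algebra.
From mathcomp Require Import complex.
From mathcomp Require Import classical_sets reals.
Set Implicit Arguments. Unset Strict Implicit. Unset Printing Implicit Defensive.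
Import Order.TTheory GRing.Theory Num.Theory.
Local Open Scope ring_scope.
Local Open Scope classical_set_scope.

Definition vnorm (R : realType) (x : 'cV[R[i]]_2) : R :=
  Num.sqrt (\sum_(k < 2) ((@complex.Re R (x k 0)) ^+ 2 + (@complex.Im R (x k 0)) ^+ 2)).

Definition opnorm (R : realType) (M : 'M[R[i]]_2) : R :=
  sup [set r : R | exists x : 'cV[R[i]]_2, vnorm x = 1 /\ r = vnorm (M *m x)].

Definition BJ_orth (R : realType) (X Y : 'M[R[i]]_2) : Prop :=
  forall lambda : R[i], opnorm (X + lambda *: Y) >= opnorm X.

Definition BJ_perp (R : realType) (X : 'M[R[i]]_2) : set 'M[R[i]]_2 :=
  [set Y | BJ_orth X Y].

(* Main.v *)
Require Import Defs.
From HB Require Import structures.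
From mathcomp Require Import all_boot all_order all_algebra.
From mathcomp Require Import complex.
From mathcomp Require Import classical_sets reals.
From mathcomp Require Import ring lra zify.
Import Order.TTheory GRing.Theory Num.Theory.
Set Implicit Arguments. Unset Strict Implicit. Unset Printing Implicit Defensive.
Local Open Scope ring_scope.
Definition sq (R : realType) (x : R[i]) : R := complex.Re x ^+ 2 + complex.Im x ^+ 2.

Lemma ReM (R : realType) (x y : R[i]) : complex.Re (x * y) = complex.Re x * complex.Re y - complex.Im x * complex.Im y.
Proof. by case: x y => [a b] [c d]. Qed.
Lemma ImM (R : realType) (x y : R[i]) : complex.Im (x * y) = complex.Re x * complex.Im y + complex.Im x * complex.Re y.
Proof. by case: x y => [a b] [c d]. Qed.
Lemma ReD (R : realType) (x y : R[i]) : complex.Re (x + y) = complex.Re x + complex.Re y.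
Proof. by case: x y => [a b] [c d]. Qed.
Lemma ImD (R : realType) (x y : R[i]) : complex.Im (x + y) = complex.Im x + complex.Im y.
Proof. by case: x y => [a b] [c d]. Qed.
Lemma ReN (R : realType) (x : R[i]) : complex.Re (- x) = - complex.Re x.
Proof. by case: x => [a b]. Qed.
Lemma ImN (R : realType) (x : R[i]) : complex.Im (- x) = - complex.Im x.
Proof. by case: x => [a b]. Qed.
Lemma ReJ (R : realType) (x : R[i]) : complex.Re (conjc x) = complex.Re x.
Proof. by case: x => [a b]. Qed.
Lemma ImJ (R : realType) (x : R[i]) : complex.Im (conjc x) = - complex.Im x.
Proof. by case: x => [a b]. Qed.
Lemma ReC (R : realType) (r : R) : complex.Re (r%:C)%C = r.
Proof. by []. Qed.
Lemma ImC (R : realType) (r : R) : complex.Im (r%:C)%C = 0.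
Proof. by []. Qed.
Lemma Re0 (R : realType) : complex.Re (0 : R[i]) = 0. Proof. by []. Qed.
Lemma Im0 (R : realType) : complex.Im (0 : R[i]) = 0. Proof. by []. Qed.
Lemma Re1 (R : realType) : complex.Re (1 : R[i]) = 1. Proof. by []. Qed.
Lemma Im1 (R : realType) : complex.Im (1 : R[i]) = 0. Proof. by []. Qed.

Ltac cexp := rewrite /sq ?(ReM, ImM, ReD, ImD, ReN, ImN, ReJ, ImJ, ReC, ImC, Re0, Im0, Re1, Im1).

Lemma sqM (R : realType) (x y : R[i]) : sq (x * y) = sq x * sq y.
Proof. cexp. ring. Qed.

Lemma sq_ge0 (R : realType) (x : R[i]) : 0 <= sq x.
Proof. rewrite /sq; nra. Qed.

Lemma sq_eq0 (R : realType) (x : R[i]) : sq x = 0 -> x = 0.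
Proof. case: x => a b; rewrite /sq /= => h.
have ha : a = 0 by nra.
have hb : b = 0 by nra.
by rewrite ha hb. Qed.

Lemma cross_test (R : realType) (p a0 a1 l m0 m1 : R[i]) :
  sq (p * a0 + l * m0) + sq (p * a1 + l * m1) =
  sq p * (sq a0 + sq a1) + sq l * (sq m0 + sq m1)
  + 2 * complex.Re (l * conjc p * (conjc a0 * m0 + conjc a1 * m1)).
Proof. cexp. ring. Qed.
Lemma sqJ (R : realType) (x : R[i]) : sq (conjc x) = sq x.
Proof. cexp. ring. Qed.
Lemma sqC (R : realType) (r : R) : sq (r%:C)%C = r ^+ 2.
Proof. cexp. ring. Qed.
Lemma sqD_le (R : realType) (x y : R[i]) : sq (x + y) <= 2 * (sq x + sq y).
Proof. case: x y => a b [c d]; rewrite /sq /=.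
have := sqr_ge0 (a - c); have := sqr_ge0 (b - d); nra. Qed.
Lemma Re_le (R : realType) (x y : R[i]) : - (2 * complex.Re (x * y)) <= sq x + sq y.
Proof. case: x y => a b [c d]; rewrite /sq /=.
have := sqr_ge0 (a + c); have := sqr_ge0 (b - d); nra. Qed.

Lemma E_gen (R : realType) (t : R) (z p q w : R[i]) :
  complex.Re (- ((t%:C)%C * conjc z) * conjc p * (p * z + q * w)) =
   - (t * sq p * sq z) - t * complex.Re ((conjc z * conjc p) * (q * w)).
Proof. case: z p q w => [z1 z2] [p1 p2] [q1 q2] [w1 w2]; rewrite /sq /=; ring. Qed.
Lemma Hl_gen (R : realType) (t : R) (z : R[i]) :
  sq (- ((t%:C)%C * conjc z)) = t ^+ 2 * sq z.
Proof. case: z => [z1 z2]; rewrite /sq /=; ring. Qed.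

Lemma core (R : realType) (p q a0 a1 y0 y1 w0 w1 : R[i]) (t : R) :
  sq p + sq q = 1 -> 0 <= t ->
  let z := conjc a0 * y0 + conjc a1 * y1 in
  let w := conjc a0 * w0 + conjc a1 * w1 in
  let n2a := sq a0 + sq a1 in
  let K := 2 * (sq y0 + sq y1 + sq w0 + sq w1) in
  let l := - ((t%:C)%C * conjc z) in
  t * sq w <= n2a / 2 -> t * sq z <= n2a / 2 -> t * K <= 1 / 2 ->
  sq (p * a0 + l * (p * y0 + q * w0)) + sq (p * a1 + l * (p * y1 + q * w1))
   <= n2a - t * sq z / 2.
Proof.
move=> hpq ht z w n2a K l h1 h2 h3.
rewrite cross_test.
have -> : conjc a0 * (p * y0 + q * w0) + conjc a1 * (p * y1 + q * w1) = p * z + q * w.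
  rewrite /z /w; ring.
rewrite /l E_gen.
have B1 := Re_le (conjc z * conjc p) (q * w).
rewrite !sqM !sqJ in B1.
rewrite Hl_gen.
have hp := sq_ge0 p. have hq := sq_ge0 q.
have hp1 : sq p <= 1 by lra.
have hq1 : sq q <= 1 by lra.
have Hm : sq (p * y0 + q * w0) + sq (p * y1 + q * w1) <= K.
  have e1 := sqD_le (p * y0) (q * w0).
  have e2 := sqD_le (p * y1) (q * w1).
  rewrite !sqM in e1 e2.
  have := sq_ge0 y0; have := sq_ge0 y1; have := sq_ge0 w0; have := sq_ge0 w1.
  rewrite /K; nra.
have hz := sq_ge0 z. have hw := sq_ge0 w.
have hK : 0 <= K by move: Hm; have := sq_ge0 (p * y0 + q * w0); have := sq_ge0 (p * y1 + q * w1); lra.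
set X := complex.Re _ in B1 *.
set M := sq (p * y0 + q * w0) + sq (p * y1 + q * w1) in Hm *.
have P1 : 0 <= sq q * (n2a / 2 - t * sq w) by apply: mulr_ge0; lra.
have P2 : 0 <= sq q * (n2a / 2 - t * sq z) by apply: mulr_ge0; lra.
have P3 : 0 <= t * sq z * (1/2 - t * K) by apply: mulr_ge0; [apply: mulr_ge0|lra].
have P4 : t ^+ 2 * sq z * M <= t ^+ 2 * sq z * K.
  apply: ler_wpM2l => //; apply: mulr_ge0 => //; exact: exprn_ge0.
have P5 : 0 <= t by [].
have P6 : - (2 * (t * X)) <= t * (sq z * sq p + sq q * sq w).
  have : t * (- (2 * X)) <= t * (sq z * sq p + sq q * sq w) by apply: ler_wpM2l.
  lra.
have hpq' : sq p = 1 - sq q by lra.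
rewrite hpq' in P6 *.
rewrite /n2a in P1 P2 *. lra.
Qed.
Lemma ord2_cases (i : 'I_2) : i = 0 \/ i = 1.
Proof. case: i => [[|[|m]] hm]; [left|right|]; try by apply: val_inj. by []. Qed.

Lemma sum2 (V : nmodType) (F : 'I_2 -> V) (k j : 'I_2) : k != j ->
  \sum_(i < 2) F i = F k + F j.
Proof.
have E : \sum_(i < 2) F i = F 0 + F 1.
  rewrite !big_ord_recl big_ord0 addr0; congr (F _ + F _); by apply: val_inj.
rewrite E; case: (ord2_cases k) => ->; case: (ord2_cases j) => -> //.
by rewrite addrC.
Qed.

Lemma n01 : (0 : 'I_2) != 1. Proof. by []. Qed.

Definition n2v (R : realType) (x : 'cV[R[i]]_2) : R := \sum_(i < 2) sq (x i 0).

Lemma vnormE (R : realType) (x : 'cV[R[i]]_2) : vnorm x = Num.sqrt (n2v x).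
Proof. by []. Qed.

Lemma n2v_ge0 (R : realType) (x : 'cV[R[i]]_2) : 0 <= n2v x.
Proof. rewrite /n2v (sum2 _ n01); have := sq_ge0 (x 0 0); have := sq_ge0 (x 1 0); lra. Qed.

Lemma mulE (R : realType) (M : 'M[R[i]]_2) (x : 'cV[R[i]]_2) i (k j : 'I_2) : k != j ->
  (M *m x) i 0 = M i k * x k 0 + M i j * x j 0.
Proof. by move=> hkj; rewrite mxE (sum2 _ hkj). Qed.

Definition ev (R : realType) (k : 'I_2) : 'cV[R[i]]_2 := \col_i (if i == k then 1 else 0).

Lemma n2v_ev (R : realType) (k : 'I_2) : n2v (ev R k) = 1.
Proof.
have [j hkj] : exists j : 'I_2, k != j.
  by case: (ord2_cases k) => ->; [exists 1|exists 0].
rewrite /n2v (sum2 _ hkj) !mxE eqxx eq_sym (negPf hkj); cexp; lra.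
Qed.

Lemma n2v_bound (R : realType) (M : 'M[R[i]]_2) (x : 'cV[R[i]]_2) : n2v x = 1 ->
  n2v (M *m x) <= 2 * (sq (M 0 0) + sq (M 0 1) + sq (M 1 0) + sq (M 1 1)).
Proof.
rewrite /n2v !(sum2 _ n01) !(mulE _ _ _ n01) => hx.
have e1 := sqD_le (M 0 0 * x 0 0) (M 0 1 * x 1 0).
have e2 := sqD_le (M 1 0 * x 0 0) (M 1 1 * x 1 0).
rewrite !sqM in e1 e2.
have h0 := sq_ge0 (x 0 0); have h1 := sq_ge0 (x 1 0).
have := sq_ge0 (M 0 0); have := sq_ge0 (M 0 1); have := sq_ge0 (M 1 0); have := sq_ge0 (M 1 1).
nra.
Qed.

Lemma vnorm1 (R : realType) (x : 'cV[R[i]]_2) : vnorm x = 1 -> n2v x = 1.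
Proof.
rewrite vnormE => h; rewrite -(sqr_sqrtr (n2v_ge0 x)) h; exact: expr1n.
Qed.

Lemma opnorm_ub (R : realType) (M : 'M[R[i]]_2) (x : 'cV[R[i]]_2) : n2v x = 1 ->
  Num.sqrt (n2v (M *m x)) <= opnorm M.
Proof.
move=> hx; apply: ub_le_sup; last first.
  by exists x; split => //; rewrite vnormE hx sqrtr1.
exists (Num.sqrt (2 * (sq (M 0 0) + sq (M 0 1) + sq (M 1 0) + sq (M 1 1)))).
move=> r [y [hy ->]]; rewrite vnormE ler_sqrt.
  exact: n2v_bound (vnorm1 hy).
have := sq_ge0 (M 0 0); have := sq_ge0 (M 0 1); have := sq_ge0 (M 1 0); have := sq_ge0 (M 1 1).
lra.
Qed.

Lemma opnorm_le (R : realType) (M : 'M[R[i]]_2) (r : R) : 0 <= r ->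
  (forall x : 'cV[R[i]]_2, n2v x = 1 -> n2v (M *m x) <= r) -> opnorm M <= Num.sqrt r.
Proof.
move=> hr h; apply: ge_sup.
  exists (vnorm (M *m ev R 0)), (ev R 0); split => //.
  by rewrite vnormE n2v_ev sqrtr1.
move=> s [x [hx ->]]; rewrite vnormE ler_sqrt //; exact: h (vnorm1 hx).
Qed.
Lemma sq_gt0 (R : realType) (x : R[i]) : x != 0 -> 0 < sq x.
Proof.
move=> hx; rewrite lt_neqAle sq_ge0 andbT eq_sym; apply/eqP => /sq_eq0 h.
by rewrite h eqxx in hx.
Qed.

Lemma perp_nec (R : realType) (A Y : 'M[R[i]]_2) (k j : 'I_2) : k != j ->
  (forall i, A i j = 0) -> BJ_orth A Y ->
  conjc (A 0 k) * Y 0 k + conjc (A 1 k) * Y 1 k = 0.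
Proof.
move=> hkj hA hperp; apply/eqP; apply: contraT => hz.
set z := conjc (A 0 k) * Y 0 k + conjc (A 1 k) * Y 1 k in hz.
set w := conjc (A 0 k) * Y 0 j + conjc (A 1 k) * Y 1 j.
set n2a := sq (A 0 k) + sq (A 1 k).
set K := 2 * (sq (Y 0 k) + sq (Y 1 k) + sq (Y 0 j) + sq (Y 1 j)).
have hsz := sq_gt0 hz.
have hsw := sq_ge0 w.
have hK : 0 <= K.
  have := sq_ge0 (Y 0 k); have := sq_ge0 (Y 1 k); have := sq_ge0 (Y 0 j); have := sq_ge0 (Y 1 j).
  rewrite /K; lra.
have hn : 0 < n2a.
  have h0 := sq_ge0 (A 0 k); have h1 := sq_ge0 (A 1 k).
  rewrite lt_neqAle; apply/andP; split; last by rewrite /n2a; lra.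
  apply/eqP => e.
  have e0 : A 0 k = 0 by apply: sq_eq0; rewrite /n2a in e; lra.
  have e1 : A 1 k = 0 by apply: sq_eq0; rewrite /n2a in e; lra.
  by move: hz; rewrite /z e0 e1 conjc0 !mul0r addr0 eqxx.
set D := sq w + sq z + n2a * K + 1.
have hD : 0 < D by rewrite /D; have := mulr_ge0 (ltW hn) hK; lra.
set t := n2a / (2 * D).
have ht : 0 <= t by rewrite /t; apply: divr_ge0; lra.
have tE : forall s, t * s = n2a / 2 * (s / D).
  move=> s; rewrite /t; field; rewrite gt_eqF //; lra.
have tle : forall s, 0 <= s -> s <= D -> t * s <= n2a / 2.
  move=> s hs hsD; rewrite tE; rewrite -[leRHS]mulr1; apply: ler_wpM2l; first lra.
  by rewrite ler_pdivrMr // mul1r.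
have h1 : t * sq w <= n2a / 2 by apply: tle => //; rewrite /D; have := mulr_ge0 (ltW hn) hK; lra.
have h2 : t * sq z <= n2a / 2 by apply: tle; [lra|rewrite /D; have := mulr_ge0 (ltW hn) hK; lra].
have h3 : t * K <= 1 / 2.
  have : t * (n2a * K) <= n2a / 2 by apply: tle; [exact: mulr_ge0 (ltW hn) hK|rewrite /D; lra].
  rewrite mulrA (mulrC t) -mulrA => hh.
  have : n2a * (t * K) <= n2a * (1/2) by lra.
  by rewrite ler_pM2l.
set l := - ((t%:C)%C * conjc z).
have Hp := hperp l.
have Hlo : Num.sqrt n2a <= opnorm A.
  have := opnorm_ub A (n2v_ev R k).
  suff -> : n2v (A *m ev R k) = n2a by [].
  rewrite /n2v (sum2 _ n01) !(mulE _ _ _ hkj) !mxE eqxx eq_sym (negPf hkj) !mulr1 !mulr0 !addr0.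
  by [].
have Hhi : opnorm (A + l *: Y) <= Num.sqrt (n2a - t * sq z / 2).
  apply: opnorm_le; first lra.
  move=> x hx.
  have hx' : sq (x k 0) + sq (x j 0) = 1 by rewrite /n2v (sum2 _ hkj) in hx.
  have := @core R (x k 0) (x j 0) (A 0 k) (A 1 k) (Y 0 k) (Y 1 k) (Y 0 j) (Y 1 j) t hx' ht h1 h2 h3.
  suff -> : n2v ((A + l *: Y) *m x) =
    sq (x k 0 * A 0 k + l * (x k 0 * Y 0 k + x j 0 * Y 0 j)) +
    sq (x k 0 * A 1 k + l * (x k 0 * Y 1 k + x j 0 * Y 1 j)) by [].
  rewrite /n2v (sum2 _ n01) !(mulE _ _ _ hkj) !mxE !hA.
  congr (sq _ + sq _); ring.
have : Num.sqrt (n2a - t * sq z / 2) < Num.sqrt n2a.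
  rewrite ltr_sqrt //; have := mulr_gt0 (lt_le_trans ltr01 (lexx 1)) hsz.
  have htp : 0 < t by rewrite /t; apply: divr_gt0; lra.
  have := mulr_gt0 htp hsz; lra.
move: Hp; rewrite /BJ_orth => Hp.
have := le_trans Hlo (le_trans Hp Hhi).
move=> a b; have := lt_le_trans b a; by rewrite ltxx.
Qed.

Lemma perp_suff (R : realType) (A Y : 'M[R[i]]_2) (k j : 'I_2) : k != j ->
  (forall i, A i j = 0) ->
  conjc (A 0 k) * Y 0 k + conjc (A 1 k) * Y 1 k = 0 -> BJ_orth A Y.
Proof.
move=> hkj hA hz l.
set n2a := sq (A 0 k) + sq (A 1 k).
have hn : 0 <= n2a by have := sq_ge0 (A 0 k); have := sq_ge0 (A 1 k); rewrite /n2a; lra.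
have Hhi : opnorm A <= Num.sqrt n2a.
  apply: opnorm_le => // x hx.
  have hx' : sq (x k 0) + sq (x j 0) = 1 by rewrite /n2v (sum2 _ hkj) in hx.
  rewrite /n2v (sum2 _ n01) !(mulE _ _ _ hkj) !hA !mul0r !addr0 !sqM.
  have := sq_ge0 (x j 0); have := sq_ge0 (A 0 k); have := sq_ge0 (A 1 k).
  rewrite /n2a; nra.
apply: (le_trans Hhi).
have := opnorm_ub (A + l *: Y) (n2v_ev R k).
apply: le_trans; rewrite ler_sqrt; last exact: n2v_ge0.
have := cross_test 1 (A 0 k) (A 1 k) l (Y 0 k) (Y 1 k).
rewrite hz mulr0 (_ : complex.Re 0 = 0) // mulr0 addr0.
rewrite /n2v (sum2 _ n01) !(mulE _ _ _ hkj) !mxE eqxx eq_sym (negPf hkj) !hA.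
rewrite !mulr1 !mulr0 !addr0 ?add0r !mul1r => ->.
have -> : sq (1 : R[i]) = 1 by cexp; lra.
have := sq_ge0 l; have := sq_ge0 (Y 0 k); have := sq_ge0 (Y 1 k).
rewrite /n2a; nra.
Qed.
Unset Implicit Arguments.
Local Open Scope classical_set_scope.
Theorem lemma5p4 (R : realType) (alpha beta gamma delta : R[i]) :
  let A : 'M[R[i]]_2 := \matrix_(i < 2, j < 2)
      (if j == 0 then (if i == 0 then alpha else beta) else 0) in
  let B : 'M[R[i]]_2 := \matrix_(i < 2, j < 2)
      (if j == 0 then 0 else (if i == 0 then gamma else delta)) in
  \rank A = 1%N -> \rank B = 1%N ->
  ((forall Y : 'M[R[i]]_2, (BJ_perp A `&` BJ_perp B) Y -> (\rank Y <= 1)%N) <->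
   ((exists c : R[i], alpha = c * gamma /\ beta = c * delta) /\
    (alpha, beta) <> (0, 0))).
Proof.
move=> A B rA rB.
have A00 : A 0 0 = alpha by rewrite mxE.
have A10 : A 1 0 = beta by rewrite mxE.
have A1 : forall i, A i 1 = 0 by move=> i; rewrite mxE.
have B01 : B 0 1 = gamma by rewrite mxE.
have B11 : B 1 1 = delta by rewrite mxE.
have B0 : forall i, B i 0 = 0 by move=> i; rewrite mxE.
have n10 : (1 : 'I_2) != 0 by [].
have nzA : (alpha, beta) <> (0, 0).
  case=> ea eb; move: rA; suff -> : A = 0 by rewrite mxrank0.
  apply/matrixP => i j; rewrite !mxE ea eb.
  by case: (j == 0); case: (i == 0).
have nzB : (gamma, delta) <> (0, 0).
  case=> ea eb; move: rB; suff -> : B = 0 by rewrite mxrank0.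
  apply/matrixP => i j; rewrite !mxE ea eb.
  by case: (j == 0); case: (i == 0).
split; last first.
  case=> [[c [ea eb]] _] Y [hA hB].
  have h1 := perp_nec n01 A1 hA.
  have h2 := perp_nec n10 B0 hB.
  rewrite A00 A10 in h1; rewrite B01 B11 in h2.
  have h3 : conjc alpha * Y 0 1 + conjc beta * Y 1 1 = 0.
    rewrite ea eb !rmorphM /=.
    have -> : conjc c * conjc gamma * Y 0 1 + conjc c * conjc delta * Y 1 1 =
      conjc c * (conjc gamma * Y 0 1 + conjc delta * Y 1 1) by ring.
    by rewrite h2 mulr0.
  set u : 'rV[R[i]]_2 := \row_i (if i == 0 then conjc alpha else conjc beta).
  have hu : u *m Y = 0.
    apply/matrixP => i j; rewrite !mxE (sum2 _ n01) !mxE /=.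
    by case: (ord2_cases j) => ->.
  have nu : u != 0.
    apply/negP => /eqP hu0.
    have e0 : conjc alpha = 0 by have := congr1 (fun M : 'rV[R[i]]_2 => M 0 0) hu0; rewrite !mxE.
    have e1 : conjc beta = 0 by have := congr1 (fun M : 'rV[R[i]]_2 => M 0 1) hu0; rewrite !mxE.
    apply: nzA; move/eqP: e0; move/eqP: e1; rewrite !conjc_eq0 => /eqP -> /eqP -> //.
  rewrite leqNgt; apply/negP => hr.
  have : \rank Y = 2%N by have := rank_leq_row Y; lia.
  move=> /eqP; rewrite -[_ == _]/(row_free Y) row_free_unit => hY.
  move: nu; rewrite -(mulmxK hY u) hu mul0mx eqxx //.
move=> H; split => //.
set d := alpha * delta - beta * gamma.
case: (eqVneq d 0) => hd.
  case: (eqVneq gamma 0) => hg.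
    have hdl : delta != 0 by apply/eqP => e; apply: nzB; rewrite hg e.
    exists (beta / delta); split; last by rewrite divfK.
    rewrite hg mulr0.
    move: hd; rewrite /d hg mulr0 subr0 => /eqP; rewrite mulf_eq0 (negPf hdl) orbF.
    by move/eqP.
  exists (alpha / gamma); split; first by rewrite divfK.
  apply: (mulIf hg); move/eqP: hd; rewrite /d subr_eq0 => /eqP hd.
  by rewrite mulrAC divfK // hd.
exfalso.
pose Y : 'M[R[i]]_2 := \matrix_(i < 2, j < 2)
  (if j == 0 then (if i == 0 then conjc beta else - conjc alpha)
   else (if i == 0 then conjc delta else - conjc gamma)).
have hYA : BJ_perp A Y.
  apply: (perp_suff n01 A1); rewrite A00 A10 !mxE /=; ring.
have hYB : BJ_perp B Y.
  apply: (perp_suff n10 B0); rewrite B01 B11 !mxE /=; ring.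
have := H Y (conj hYA hYB).
have he : conjc d != 0 by rewrite conjc_eq0.
pose Z : 'M[R[i]]_2 := (conjc d)^-1 *: \matrix_(i < 2, j < 2)
  (if j == 0 then (if i == 0 then - conjc gamma else conjc alpha)
   else (if i == 0 then - conjc delta else conjc beta)).
have hYZ : Y *m Z = 1%:M.
  apply/matrixP => i j; rewrite !mxE (sum2 _ n01) !mxE /=.
  case: (ord2_cases i) => ->; case: (ord2_cases j) => -> /=;
  rewrite /d !rmorphB !rmorphM /=; field; by rewrite /d !rmorphB !rmorphM /= in he.
have [hY _] := mulmx1_unit hYZ.
by rewrite (mxrank_unit hY).
Qed.
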